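(* Let $N\ge1$, $\gamma_1,\dots,\gamma_N>0$, and let $G$ be an $N\times N$ complex Hermitian matrix. Set $\Gamma=\mathrm{diag}(\gamma_1,\dots,\gamma_N,\gamma_1,\dots,\gamma_N)$, $$\mathcal{M}_{\mathrm{IME}}=\begin{pmatrix}\mathrm{Im}[G] & \mathrm{Re}[G]\\ -\mathrm{Re}[G] & -\mathrm{Im}[G]^{\mathrm T}\end{pmatrix},\qquad S_{\mathrm{IME}}(\omega)=\sqrt{2\Gamma}\,(\mathrm{i}\omega\mathbb{I}+\Gamma-\mathcal{M}_{\mathrm{IME}})^{-1}\sqrt{2\Gamma}-\mathbb{I},$$ and $L=\frac{1}{\sqrt2}\begin{pmatrix}I & I\\ -\mathrm{i}I & \mathrm{i}I\end{pmatrix}$, where $I$ and $\mathbb{I}$ are the $N\times N$ and $2N\times 2N$ identities. Then $\mathrm{i}\omega\mathbb{I}+\Gamma-\mathcal{M}_{\mathrm{IME}}$ is invertible for all $\omega\in\mathbb{R}$, and there is an $N\times N$ matrix-valued function $U_{\mathrm{IME}}(\omega)$ such that for all $\omega\in\mathbb{R}$ $$L^\dagger S_{\mathrm{IME}}(\omega)L=\begin{pmatrix}U_{\mathrm{IME}}(\omega) & 0\\ 0 & U_{\mathrm{IME}}(-\omega)^*\end{pmatrix},$$ and $U_{\mathrm{IME}}(\omega)$ is unitary for every $\omega\in\mathbb{R}$.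
   Context: $\mathrm{Re}$, $\mathrm{Im}$ are entrywise; ${}^*$ denotes entrywise complex conjugation and ${}^\dagger$ conjugate transpose; $\sqrt{2\Gamma}$ is the entrywise square root of the diagonal matrix $2\Gamma$. *)

(* Defs.v *)
From HB Require Import structures.
From mathcomp Require Import all_boot all_order all_algebra.
From mathcomp Require Import sesquilinear spectral.
From mathcomp Require Import complex.
Set Implicit Arguments. Unset Strict Implicit. Unset Printing Implicit Defensive.
Import Order.TTheory GRing.Theory Num.Theory.
Local Open Scope ring_scope.

Section IME.
Variables (R : rcfType) (N : nat).
Local Notation C := R[i].

Definition rC (x : R) : C := (x%:C)%C.

Definition ReM (G : 'M[C]_N) : 'M[C]_N := map_mx (fun z => 'Re z) G.
Definition ImM (G : 'M[C]_N) : 'M[C]_N := map_mx (fun z => 'Im z) G.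

Definition adj {m n} (A : 'M[C]_(m, n)) : 'M[C]_(n, m) := map_mx Num.conj (A ^T).

Definition M_IME (G : 'M[C]_N) : 'M[C]_(N + N) :=
  block_mx (ImM G) (ReM G) (- ReM G) (- (ImM G)^T).

Definition diagR (g : 'I_N -> R) : 'M[C]_N := diag_mx (\row_i rC (g i)).

Definition Gamma (g : 'I_N -> R) : 'M[C]_(N + N) :=
  block_mx (diagR g) 0 0 (diagR g).

Definition sqrt2Gamma (g : 'I_N -> R) : 'M[C]_(N + N) :=
  block_mx (diagR (fun i => Num.sqrt (2 * g i))) 0 0
           (diagR (fun i => Num.sqrt (2 * g i))).

Definition K_IME (g : 'I_N -> R) (G : 'M[C]_N) (w : R) : 'M[C]_(N + N) :=
  ('i * rC w)%:M + Gamma g - M_IME G.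

Definition S_IME (g : 'I_N -> R) (G : 'M[C]_N) (w : R) : 'M[C]_(N + N) :=
  sqrt2Gamma g *m invmx (K_IME g G w) *m sqrt2Gamma g - 1%:M.

Definition Lmx : 'M[C]_(N + N) :=
  (rC (Num.sqrt 2))^-1 *: block_mx 1%:M 1%:M (- 'i%:M) ('i%:M).

End IME.

(* Main.v *)
Require Import Defs.
From HB Require Import structures.
From mathcomp Require Import all_boot all_order all_algebra.
From mathcomp Require Import sesquilinear spectral.
From mathcomp Require Import complex.
From mathcomp Require Import ring lra.
Import Order.TTheory GRing.Theory Num.Theory.
Local Open Scope ring_scope.

Section Aux.
Variables (R : rcfType) (N : nat).
Local Notation C := R[i].

Lemma ii : 'i * 'i = -1 :> C.
Proof. by rewrite -expr2 sqrCi. Qed.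

Definition Pm : 'M[C]_(N + N) := block_mx 1%:M 1%:M (- 'i%:M) ('i%:M).
Definition Qm : 'M[C]_(N + N) := block_mx 1%:M ('i%:M) 1%:M (- 'i%:M).
Definition cL : C := (rC (Num.sqrt 2))^-1.

Lemma Lmx_E : Lmx R N = cL *: Pm.
Proof. by []. Qed.

Lemma conj_rC (x : R) : Num.conj (rC x) = rC x.
Proof. exact: conjc_real. Qed.

Lemma adjL : adj (Lmx R N) = cL *: Qm.
Proof.
rewrite /adj Lmx_E /Pm /Qm linearZ /= map_mxZ /cL fmorphV.
congr (_ *: _); first by congr (_^-1); exact: conjc_real.
rewrite tr_block_mx map_block_mx !tr_scalar_mx ?linearN /= ?tr_scalar_mx.
rewrite !map_mxN !map_scalar_mx /= conjCi conjC1 raddfN opprK.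
by [].
Qed.

Lemma QXP (A B Cc D : 'M[C]_N) : Qm *m block_mx A B Cc D *m Pm =
  block_mx (A + D + 'i *: (Cc - B)) (A - D + 'i *: (Cc + B))
           (A - D - 'i *: (Cc + B)) (A + D - 'i *: (Cc - B)).
Proof.
rewrite /Qm /Pm !mulmx_block ?mul1mx ?mulmx1 ?mulmxN ?mulNmx ?mul_scalar_mx ?mul_mx_scalar.
have e1 : A + 'i *: Cc - 'i *: (B + 'i *: D) = A + D + 'i *: (Cc - B).
  apply/matrixP => i j; rewrite !mxE; ring: (ii).
have e2 : A + 'i *: Cc + 'i *: (B + 'i *: D) = A - D + 'i *: (Cc + B).
  apply/matrixP => i j; rewrite !mxE; ring: (ii).
have e3 : A - 'i *: Cc - 'i *: (B - 'i *: D) = A - D - 'i *: (Cc + B).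
  apply/matrixP => i j; rewrite !mxE; ring: (ii).
have e4 : A - 'i *: Cc + 'i *: (B - 'i *: D) = A + D - 'i *: (Cc - B).
  apply/matrixP => i j; rewrite !mxE; ring: (ii).
by rewrite e1 e2 e3 e4.
Qed.

Lemma QP : Qm *m Pm = (2 : C)%:M.
Proof.
have := QXP 1%:M 0 0 1%:M; rewrite -scalar_mx_block mulmx1 => ->.
rewrite (scalar_mx_block N N).
have e1 : (1%:M + 1%:M + 'i *: (0 - 0) : 'M[C]_N) = 2%:M.
  by apply/matrixP => i j; rewrite !mxE; case: (i == j) => /=; rewrite ?mulr1n ?mulr0n; ring.
have e2 : (1%:M - 1%:M + 'i *: (0 + 0) : 'M[C]_N) = 0.
  apply/matrixP => i j.
  by rewrite !mxE; ring.
have e3 : (1%:M - 1%:M - 'i *: (0 + 0) : 'M[C]_N) = 0.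
  by apply/matrixP => i j; rewrite !mxE; ring.
have e4 : (1%:M + 1%:M - 'i *: (0 - 0) : 'M[C]_N) = 2%:M.
  by apply/matrixP => i j; rewrite !mxE; case: (i == j) => /=; rewrite ?mulr1n ?mulr0n; ring.
by rewrite e1 e2 e3 e4.
Qed.

Lemma PQ : Pm *m Qm = (2 : C)%:M.
Proof.
rewrite /Qm /Pm !mulmx_block ?mul1mx ?mulmx1 ?mulmxN ?mulNmx ?mul_scalar_mx ?mul_mx_scalar.
rewrite (scalar_mx_block N N).
have e1 : (1%:M + 1%:M : 'M[C]_N) = 2%:M.
  by apply/matrixP => i j; rewrite !mxE; case: (i == j) => /=; rewrite ?mulr1n ?mulr0n; ring.
have e2 : ('i%:M - 'i%:M : 'M[C]_N) = 0 by rewrite subrr.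
have e3 : (- 'i%:M + 'i%:M : 'M[C]_N) = 0 by rewrite addrC subrr.
have e4 : (- ('i *: 'i%:M) - 'i *: 'i%:M : 'M[C]_N) = 2%:M.
  by apply/matrixP => i j; rewrite !mxE; case: (i == j) => /=; rewrite ?mulr1n ?mulr0n; ring: (ii).
by rewrite e1 e2 e3 e4.
Qed.

Lemma blk_commP (D : 'M[C]_N) : block_mx D 0 0 D *m Pm = Pm *m block_mx D 0 0 D.
Proof.
rewrite /Pm !mulmx_block !mul1mx !mulmx1 !mulmx0 !mul0mx !mulmxN !mulNmx !mul_scalar_mx !mul_mx_scalar.
by rewrite !addr0 !add0r.
Qed.

Lemma blk_commQ (D : 'M[C]_N) : Qm *m block_mx D 0 0 D = block_mx D 0 0 D *m Qm.
Proof.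
rewrite /Qm !mulmx_block !mul1mx !mulmx1 !mulmx0 !mul0mx !mulmxN !mulNmx !mul_scalar_mx !mul_mx_scalar.
by rewrite !addr0 !add0r.
Qed.

Lemma cL2 : cL * cL * 2 = 1.
Proof.
rewrite /cL -invfM -rmorphM -expr2 sqr_sqrtr ?ler0n // rmorph_nat mulVf //.
by rewrite pnatr_eq0.
Qed.

End Aux.

Set Implicit Arguments. Unset Strict Implicit.
Local Open Scope sesquilinear_scope.

Section Aux2.
Variables (R : rcfType) (N : nat) (g : 'I_N -> R) (G : 'M[R[i]]_N).
Hypothesis Hg : forall i, 0 < g i.
Hypothesis HG : G \is hermsymmx.
Local Notation C := R[i].

Definition Sd : 'M[C]_N := diagR (fun i => Num.sqrt (2 * g i)).
Definition K1 (w : R) : 'M[C]_N := ('i * rC w)%:M + diagR g + 'i *: G.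
Definition K2 (w : R) : 'M[C]_N := ('i * rC w)%:M + diagR g - 'i *: map_mx Num.conj G.

Lemma Gh i j : G i j = Num.conj (G j i).
Proof.
have /is_hermitianmxP H := HG.
have := congr1 (fun M : 'M[C]_N => M i j) H.
by rewrite expr0 scale1r !mxE.
Qed.

Lemma rCN (x : R) : rC (- x) = - rC x.
Proof. by rewrite /rC rmorphN. Qed.
Lemma rCM (x y : R) : rC (x * y) = rC x * rC y.
Proof. by rewrite /rC rmorphM. Qed.
Lemma rC2 : rC 2 = 2 :> C.
Proof. by rewrite /rC rmorph_nat. Qed.

Lemma K2E w : map_mx Num.conj (K1 (- w)) = K2 w.
Proof.
apply/matrixP => i j; rewrite !mxE.
rewrite !rmorphD !rmorphMn !rmorphM /=.
rewrite conjCi !conj_rC rCN.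
by ring.
Qed.

Lemma Sdt : Sd ^t* = Sd.
Proof.
apply/matrixP => i j; rewrite !mxE rmorphMn /=.
rewrite conj_rC.
case: (eqVneq i j) => [->|ne] //.
Qed.

Lemma SdSd w : Sd *m Sd = K1 w + (K1 w)^t*.
Proof.
rewrite /Sd /diagR mulmx_diag; apply/matrixP => i j; rewrite !mxE.
rewrite !rmorphD !rmorphMn !rmorphM /= conjCi !conj_rC -Gh.
case: (eqVneq i j) => [<-|_]; rewrite ?mulr1n ?mulr0n; last by ring.
have hs : rC (Num.sqrt (2 * g i)) * rC (Num.sqrt (2 * g i)) = 2 * rC (g i).
  by rewrite -rCM -expr2 sqr_sqrtr ?rCM ?rC2 // mulr_ge0 ?ler0n ?ltW.
by ring: hs.
Qed.

Lemma K1unit w : K1 w \in unitmx.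
Proof.
set A := K1 w.
rewrite -row_free_unit -kermx_eq0; apply/eqP/matrixP => i j.
set v := row i (kermx A).
have vA : v *m A = 0 by rewrite /v -row_mul mulmx_ker row0.
suff v0 : v = 0 by have := congr1 (fun M : 'rV_N => M 0 j) v0; rewrite !mxE.
have u0 : v *m Sd = 0.
  apply/eqP; apply/negPn/negP => nz; have := dotmx_is_dotmx nz; rewrite dotmxE.
  have -> : (v *m Sd) *m (v *m Sd)^t* = v *m (Sd *m Sd) *m v^t*.
    by rewrite trmx_mul map_mxM Sdt !mulmxA.
  rewrite (SdSd w) mulmxDr mulmxDl -/A vA mul0mx add0r.
  rewrite -mulmxA -map_mxM -trmx_mul vA trmx0 map_mx0 mulmx0 mxE ltxx //.
apply/matrixP => a b; have := congr1 (fun M : 'rV_N => M a b) u0.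
rewrite /Sd /diagR mul_mx_diag !mxE => /eqP; rewrite mulf_eq0 => /orP [/eqP -> //|].
rewrite /rC fmorph_eq0 sqrtr_eq0 => H; exfalso; move: H; apply/negP.
by rewrite -ltNge mulr_gt0 ?ltr0n.
Qed.

End Aux2.

Section Aux3.
Variables (R : rcfType) (N : nat) (g : 'I_N -> R) (G : 'M[R[i]]_N).
Hypothesis Hg : forall i, 0 < g i.
Hypothesis HG : G \is hermsymmx.
Local Notation C := R[i].

Lemma blk_eq m1 m2 n1 n2 (A1 B1 : 'M[C]_(m1, n1)) (A2 B2 : 'M[C]_(m1, n2))
  (A3 B3 : 'M[C]_(m2, n1)) (A4 B4 : 'M[C]_(m2, n2)) :
  A1 = B1 -> A2 = B2 -> A3 = B3 -> A4 = B4 ->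
  block_mx A1 A2 A3 A4 = block_mx B1 B2 B3 B4.
Proof. by move=> -> -> -> ->. Qed.

Definition Uf (w : R) : 'M[C]_N := Sd g *m invmx (K1 g G w) *m Sd g - 1%:M.

Lemma Uunitary w : Uf w \is unitarymx.
Proof.
apply/unitarymxP.
set A := K1 g G w; set A' := A^t*.
have Au : A \in unitmx := K1unit Hg HG w.
have A'u : A' \in unitmx by rewrite /A' map_unitmx unitmx_tr.
have Ut : (Uf w)^t* = Sd g *m invmx A' *m Sd g - 1%:M.
  rewrite /Uf linearB /= map_mxB /= !trmx_mul !map_mxM trmx1 map_mx1.
  by rewrite Sdt trmx_inv map_invmx mulmxA.
rewrite Ut /Uf -/A.
set X := Sd g *m invmx A *m Sd g; set Y := Sd g *m invmx A' *m Sd g.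
have XY : X *m Y = X + Y.
  rewrite /X /Y !mulmxA -[Sd g *m invmx A *m Sd g *m Sd g]mulmxA (SdSd Hg HG w) -/A -/A'.
  rewrite mulmxDr !mulmxDl -[Sd g *m invmx A *m A]mulmxA mulVmx // mulmx1.
  rewrite -[Sd g *m invmx A *m A' *m invmx A']mulmxA mulmxV // mulmx1.
  by rewrite addrC.
rewrite mulmxBl !mulmxBr XY mulmx1 mul1mx mulmx1.
by rewrite [X + Y]addrC addrK opprB addrC subrK.
Qed.

Lemma QKP w : Qm R N *m K_IME g G w *m Pm R N = 2 *: block_mx (K1 g G w) 0 0 (K2 g G w).
Proof.
rewrite /K_IME /Gamma /M_IME (scalar_mx_block N N) add_block_mx opp_block_mx add_block_mx.
rewrite QXP scale_block_mx.
apply: blk_eq; apply/matrixP => i j; rewrite !mxE;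
  have h1 : 'Im (G j i) = - 'Im (G i j) by rewrite (Gh HG j i) Im_conj.
all: have hG : G i j = 'Re (G i j) + 'i * 'Im (G i j) by exact: Crect.
all: have hc : Num.conj (G i j) = 'Re (G i j) - 'i * 'Im (G i j).
all: try by rewrite {1}hG rmorphD rmorphM /= conjCi !conj_Creal ?Creal_Re ?Creal_Im //; ring.
all: by rewrite h1; ring: (ii R) hG hc.
Qed.

Lemma Kd_unit w : block_mx (K1 g G w) 0 0 (K2 g G w) \in unitmx.
Proof.
rewrite unitmxE det_ublock unitrM -!unitmxE K1unit // -(K2E g G) map_unitmx.
exact: K1unit.
Qed.

Lemma Kunit w : K_IME g G w \in unitmx.
Proof.
have : Qm R N *m K_IME g G w *m Pm R N \in unitmx.
  by rewrite QKP unitmxZ ?Kd_unit // unitfE pnatr_eq0.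
by rewrite !unitmx_mul => /andP [/andP [_ ->] _].
Qed.

Lemma invKd w : invmx (block_mx (K1 g G w) 0 0 (K2 g G w)) =
   block_mx (invmx (K1 g G w)) 0 0 (invmx (K2 g G w)).
Proof.
have K2u : K2 g G w \in unitmx by rewrite -(K2E g G) map_unitmx K1unit.
have H : block_mx (K1 g G w) 0 0 (K2 g G w) *m block_mx (invmx (K1 g G w)) 0 0 (invmx (K2 g G w)) = 1%:M.
  rewrite mulmx_block !mulmxV ?K1unit // !mulmx0 !mul0mx !addr0 !add0r.
  by rewrite -scalar_mx_block.
by rewrite -[RHS](mulKmx (Kd_unit w)) H mulmx1.
Qed.

Lemma QinvP w : Qm R N *m invmx (K_IME g G w) *m Pm R N =
  2 *: invmx (block_mx (K1 g G w) 0 0 (K2 g G w)).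
Proof.
set K := K_IME g G w; set Kd := block_mx _ _ _ _; set Z := _ *m _ *m Pm R N.
have Ku : K \in unitmx := Kunit w.
have KZ : Kd *m Z = 2 *: 1%:M.
  apply: (@scalerI _ _ 2); first by rewrite pnatr_eq0.
  rewrite scalemxAl -QKP /Z !mulmxA -[Qm R N *m K *m Pm R N *m Qm R N]mulmxA PQ.
  rewrite -[(2 : C)%:M]scalemx1 -scalemxAr mulmx1 -!scalemxAl mulmxK // QP.
  by rewrite scalemx1.
by rewrite -[Z](mulKmx (Kd_unit w)) KZ -scalemxAr mulmx1.
Qed.

Lemma Sdc : map_mx Num.conj (Sd g) = Sd g.
Proof. by apply/matrixP => i j; rewrite !mxE rmorphMn /= conj_rC. Qed.

Lemma main_eq w : adj (Lmx R N) *m S_IME g G w *m Lmx R N =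
  block_mx (Uf w) 0 0 (map_mx Num.conj (Uf (- w))).
Proof.
rewrite adjL Lmx_E -scalemxAl -scalemxAl -scalemxAr scalerA.
rewrite /S_IME mulmxBr mulmxBl mulmx1 QP.
have SgE : sqrt2Gamma g = block_mx (Sd g) 0 0 (Sd g) by [].
rewrite SgE.
set Sg := block_mx (Sd g) 0 0 (Sd g).
have E : Qm R N *m (Sg *m invmx (K_IME g G w) *m Sg) *m Pm R N =
    Sg *m (Qm R N *m invmx (K_IME g G w) *m Pm R N) *m Sg.
  by rewrite !mulmxA blk_commQ -!mulmxA blk_commP.
rewrite E QinvP.
set Kdi := invmx _.
have E2 : Sg *m (2 *: Kdi) *m Sg - (2 : C)%:M = 2 *: (Sg *m Kdi *m Sg - 1%:M).
  by rewrite scalerBr scalemx1 -scalemxAr -scalemxAl.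
rewrite E2 scalerA cL2 scale1r /Kdi invKd /Sg.
rewrite !mulmx_block (scalar_mx_block N N) opp_block_mx add_block_mx.
rewrite !mulmx0 !mul0mx !addr0 !add0r ?oppr0 ?addr0.
apply: blk_eq; rewrite ?mul0mx ?mulmx0 ?oppr0 ?addr0 ?subr0 //.
by rewrite /Uf map_mxB map_mxM map_mxM map_invmx (K2E g G) Sdc map_mx1 ?opprK.
Qed.

End Aux3.

Unset Implicit Arguments. Set Strict Implicit.
Local Close Scope sesquilinear_scope.

Theorem mainTheorem4 (R : rcfType) (N : nat) (HN : (0 < N)%N)
  (g : 'I_N -> R) (Hg : forall i, 0 < g i) (G : 'M[R[i]]_N)
  (HG : G \is hermsymmx) :
  (forall w : R, K_IME g G w \in unitmx) /\
  exists U : R -> 'M[R[i]]_N,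
    forall w : R,
      adj (Lmx R N) *m S_IME g G w *m Lmx R N
        = block_mx (U w) 0 0 (map_mx Num.conj (U (- w)))
      /\ U w \is unitarymx.
Proof.
split; first by move=> w; exact: Kunit.
exists (Uf g G) => w; split; first exact: main_eq.
exact: Uunitary.
Qed.
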